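(* Let $X$ be a locally compact, Hausdorff, second countable space and $(Y,d)$ a metric space. Then the topologies $\tau_{co}$ and $\tau_{cc}$ coincide on $C_{od}(X,Y)$.
   Context: $C_{od}(X,Y)$ is the set of continuous functions $f:\mathrm{dom}(f)\to Y$ whose domain is an open subset of $X$ (including the empty function), and $C_{od}^\star(X,Y)=C_{od}(X,Y)\setminus\{\emptyset\}$. The topology $\tau_{co}$ on $C_{od}(X,Y)$ is generated by the subbasic sets $\langle K,V\rangle=\{f: K\subseteq\mathrm{dom}(f),\ f(K)\subseteq V\}$, $K\subseteq X$ compact, $V\subseteq Y$ open. For a nonempty compact $K\subseteq\mathrm{dom}(f)\cap\mathrm{dom}(g)$, $d_K(f,g)=\sup_{x\in K}d(f(x),g(x))$; for $f\in C_{od}^\star(X,Y)$, nonempty compact $K\subseteq\mathrm{dom}(f)$ and $\epsilon>0$, $B_K(f,\epsilon)=\{g\in C_{od}^\star(X,Y): K\subseteq\mathrm{dom}(g),\ d_K(f,g)<\epsilon\}$. The topology of compact convergence $\tau_{cc}$ is the topology having as basis all sets $B_K(f,\epsilon)$ together with $C_{od}(X,Y)$. *)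

(* Defs.v *)
From HB Require Import structures.
From mathcomp Require Import all_boot all_order all_algebra.
From mathcomp Require Import all_classical all_reals all_analysis.
Set Implicit Arguments. Unset Strict Implicit. Unset Printing Implicit Defensive.
Import Order.TTheory GRing.Theory Num.Theory.
Local Open Scope classical_set_scope.
Local Open Scope ring_scope.

Section Cod.
Context {R : realType} {X : topologicalType} {Y : Type} (d : Y -> Y -> R).

Definition is_metric : Prop :=
  [/\ forall y1 y2, d y1 y2 = 0 <-> y1 = y2,
      forall y1 y2, d y1 y2 = d y2 y1 &
      forall y1 y2 y3, d y1 y3 <= d y1 y2 + d y2 y3].

Definition mopen (V : set Y) : Prop :=
  forall y, V y -> exists2 e : R, 0 < e & forall y', d y y' < e -> V y'.

(* partial functions X -> Y, represented by their graph as X -> option Y *)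
Definition pfun := X -> option Y.

Definition dom (f : pfun) : set X := [set x | exists y, f x = Some y].

(* continuity of f on its domain (topological continuity of the restriction) *)
Definition pcontinuous (f : pfun) : Prop :=
  forall x y, f x = Some y -> forall V, mopen V -> V y ->
    nbhs x [set x' | exists2 y', f x' = Some y' & V y'].

(* the set C_od(X,Y) (including the empty function) *)
Definition Cod : set pfun := [set f | open (dom f) /\ pcontinuous f].

Definition coSub (K : set X) (V : set Y) : set pfun :=
  [set f | Cod f /\ K `<=` dom f /\ forall x y, K x -> f x = Some y -> V y].

Definition tau_co (U : set pfun) : Prop :=
  U `<=` Cod /\
  forall f, U f -> exists n (K : 'I_n -> set X) (V : 'I_n -> set Y),
    [/\ forall i, compact (K i) /\ mopen (V i),
        forall i, coSub (K i) (V i) f &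
        forall g, Cod g -> (forall i, coSub (K i) (V i) g) -> U g].

Definition dK (K : set X) (f g : pfun) : R :=
  sup [set r | exists x y1 y2,
         [/\ K x, f x = Some y1, g x = Some y2 & r = d y1 y2]].

Definition BK (f : pfun) (K : set X) (e : R) : set pfun :=
  [set g | Cod g /\ g <> (fun=> None) /\ K `<=` dom g /\ dK K f g < e].

Definition ccBasic (B : set pfun) : Prop :=
  B = Cod \/
  exists f K e, Cod f /\ f <> (fun=> None) /\ K !=set0 /\ compact K /\
                K `<=` dom f /\ 0 < e /\ B = BK f K e.

Definition tau_cc (U : set pfun) : Prop :=
  U `<=` Cod /\
  forall f, U f -> exists B, [/\ ccBasic B, B f & B `<=` U].

End Cod.

(* Main.v *)
Require Import Defs.
From mathcomp Require Import all_boot all_order all_algebra.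
From mathcomp Require Import all_classical all_reals all_analysis.
From mathcomp Require Import lra.
Set Implicit Arguments. Unset Strict Implicit. Unset Printing Implicit Defensive.
Import Order.TTheory GRing.Theory Num.Theory.
Local Open Scope classical_set_scope.
Local Open Scope ring_scope.

Lemma finite_cover (X : topologicalType) (K : set X) (N : X -> set X) :
  compact K -> (forall z, K z -> nbhs z (N z)) ->
  exists s : seq X, (forall z, z \in s -> K z) /\
     forall x, K x -> exists2 z, z \in s & N z x.
Proof.
move=> cK hN.
pose F := filter_from [set: seq X] (fun t => [set s : seq X | {subset t <= s}]).
have FF : Filter F.
  apply: filter_from_filter; first by exists [::].
  move=> t1 t2 _ _; exists (t1 ++ t2) => // s Hs; split => z Hz; apply: Hs;
  by rewrite mem_cat Hz ?orbT.
pose P := fun (s : seq X) x => exists z, [/\ z \in s, K z & N z x].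
have := (compact_near_coveringP K).1 cK (seq X) F P FF.
case.
  move=> x Kx.
  exists (N x, [set s : seq X | {subset [:: x] <= s}]); first split => //=.
    exact: hN.
    by exists [:: x].
  move=> [x' s] /= [Nx' Hs]; exists x; split => //; apply: Hs; exact: mem_head.
move=> t _ Ht.
have := Ht t (fun z h => h).
move=> Hc.
exists [seq z <- t | `[< K z >]]; split.
  by move=> z; rewrite mem_filter => /andP[/asboolP].
move=> x Kx; have [z [zt Kz Nz]] := Hc x Kx; exists z => //.
by rewrite mem_filter zt andbT; apply/asboolP.
Qed.

Lemma seq_min (R : realType) (T : eqType) (s : seq T) (e : T -> R) :
  (forall z, z \in s -> 0 < e z) ->
  exists2 e0, 0 < e0 & forall z, z \in s -> e0 <= e z.
Proof.
elim: s => [|a s IH] H; first by exists 1.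
have [e0 e0p He0] := IH (fun z zs => H z (mem_behead (s:=a::s) zs)).
exists (Num.min e0 (e a)).
  by rewrite lt_min e0p H // mem_head.
move=> z; rewrite in_cons => /orP[/eqP->|zs].
  by rewrite ge_min lexx orbT.
by rewrite ge_min He0.
Qed.

Lemma seq_max (R : realType) (T : eqType) (s : seq T) (e : T -> R) :
  exists M, forall z, z \in s -> e z <= M.
Proof.
elim: s => [|a s [M HM]]; first by exists 0.
exists (Num.max M (e a)) => z; rewrite in_cons => /orP[/eqP->|zs].
  by rewrite le_max lexx orbT.
by rewrite le_max HM.
Qed.

Lemma cover_lb (R : realType) (X : topologicalType) (K : set X) (Q : R -> X -> Prop) :
  compact K -> (forall e e' x, 0 < e' -> e' <= e -> Q e x -> Q e' x) ->
  (forall z, K z -> exists2 e, 0 < e & nbhs z (Q e)) ->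
  exists2 e, 0 < e & forall x, K x -> Q e x.
Proof.
move=> cK Qm Hl.
have H0 : forall z, exists e : R, K z -> 0 < e /\ nbhs z (Q e).
  move=> z; case: (EM (K z)) => Kz.
    by have [e ep ne] := Hl z Kz; exists e.
  by exists 0.
have [ef Hef] := choice H0.
have [s [sK sc]] := finite_cover (N := fun z => Q (ef z)) cK
   (fun z Kz => (Hef z Kz).2).
have [e0 e0p He0] := seq_min (e := ef) (fun z zs => (Hef z (sK z zs)).1).
exists e0 => // x Kx; have [z zs Qz] := sc x Kx.
exact: (Qm _ _ _ e0p (He0 z zs) Qz).
Qed.

Lemma cover_ub (R : realType) (X : topologicalType) (K : set X) (Q : R -> X -> Prop) :
  compact K -> (forall e e' x, e <= e' -> Q e x -> Q e' x) ->
  (forall z, K z -> exists e, nbhs z (Q e)) ->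
  exists e, forall x, K x -> Q e x.
Proof.
move=> cK Qm Hl.
have H0 : forall z, exists e : R, K z -> nbhs z (Q e).
  move=> z; case: (EM (K z)) => Kz.
    by have [e ne] := Hl z Kz; exists e.
  by exists 0.
have [ef Hef] := choice H0.
have [s [sK sc]] := finite_cover (N := fun z => Q (ef z)) cK
   (fun z Kz => (Hef z Kz)).
have [M HM] := seq_max s ef.
exists M => x Kx; have [z zs Qz] := sc x Kx.
exact: (Qm _ _ _ (HM z zs) Qz).
Qed.

Section M.
Variables (R : realType) (X : topologicalType) (Y : Type) (d : Y -> Y -> R).
Hypothesis Hm : is_metric d.

Lemma d0 y : d y y = 0.
Proof. by case: Hm => H _ _; apply/H. Qed.
Lemma dsym y z : d y z = d z y.
Proof. by case: Hm. Qed.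
Lemma dtri y z w : d y w <= d y z + d z w.
Proof. by case: Hm. Qed.
Lemma dge0 y z : 0 <= d y z.
Proof. have := dtri y z y; rewrite d0 (dsym z y); lra. Qed.

Lemma ball_nbhs (f : @pfun X Y) x y r : pcontinuous d f -> f x = Some y -> 0 < r ->
  nbhs x [set x' | exists2 y', f x' = Some y' & d y y' < r].
Proof.
move=> Cf fx rp; apply: (Cf x y fx); last by rewrite d0.
move=> y' dy'; exists (r - d y y'); first by rewrite subr_gt0.
move=> y'' dd; have := dtri y y' y''; lra.
Qed.

Lemma dK_ub (f g : @pfun X Y) K : pcontinuous d f -> pcontinuous d g -> compact K ->
  K `<=` dom f -> K `<=` dom g ->
  has_ubound [set r | exists x y1 y2,
         [/\ K x, f x = Some y1, g x = Some y2 & r = d y1 y2]].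
Proof.
move=> Cf Cg cK Kf Kg.
pose Q := (fun (M : R) x => forall y1 y2, f x = Some y1 -> g x = Some y2 -> d y1 y2 <= M).
have mono : forall e e' x, e <= e' -> Q e x -> Q e' x.
  by move=> e e' x le H y1 y2 f1 g2; apply: le_trans le; apply: H.
have loc : forall z, K z -> exists e, nbhs z (Q e).
  move=> z Kz; have [a fa] := Kf z Kz; have [b gb] := Kg z Kz.
  exists (d a b + 2); apply: filterS (filterI (ball_nbhs Cf fa ltr01) (ball_nbhs Cg gb ltr01)).
  move=> x [[a' fa' da] [b' gb' db]] y1 y2; rewrite fa' gb' => -[<-] [<-].
  have := dtri a' a b'; have := dtri a b b'; rewrite (dsym a' a); lra.
have [M HM] := cover_ub cK mono loc.
exists M => q [x [y1 [y2 [Kx f1 g2 ->]]]]; exact: (HM x Kx _ _ f1 g2).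
Qed.

Lemma closedC (f : @pfun X Y) z r : pcontinuous d f ->
  closed [set x | forall yz y, f z = Some yz -> f x = Some y -> d yz y <= r].
Proof.
move=> Cf x clx yz y fz fx; rewrite leNgt; apply/negP => lt.
have := clx _ (ball_nbhs Cf fx (_ : 0 < d yz y - r)).
rewrite subr_gt0 => /(_ lt) [x' [Cx' [y'' fx'' dd]]].
have := Cx' yz y'' fz fx''; have := dtri yz y'' y; rewrite (dsym y'' y); lra.
Qed.

Lemma bigU_mem n (K : 'I_n -> set X) (s : seq 'I_n) i x : i \in s -> K i x ->
  (\big[setU/set0]_(j <- s) K j) x.
Proof.
elim: s => // a s IH; rewrite in_cons big_cons => /orP[/eqP<- Kx|iS Kx].
  by left.
by right; apply: IH.
Qed.


Lemma co_cc (U : set (@pfun X Y)) : tau_co d U -> tau_cc d U.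
Proof.
move=> [UC HU]; split => // f Uf.
have [n [K [V [hKV hf hU]]]] := HU f Uf.
have Cf := UC f Uf.
case: (EM (exists x0, dom f x0)) => [[x0 fx0]|nd]; last first.
  exists (Cod d); split; [by left | done |].
  move=> g Cg; apply: hU => // i; split => //; split.
    by move=> x Kx; exfalso; apply: nd; exists x; apply: (hf i).2.1.
  by move=> x y Kx; exfalso; apply: nd; exists x; apply: (hf i).2.1.
pose L := \big[setU/set0]_(i <- enum 'I_n) K i `|` [set x0].
have cL : compact L.
  apply: compactU; last exact: compact_set1.
  by apply: bigsetU_compact => i _; exact: (hKV i).1.
have LK : forall i, K i `<=` L.
  by move=> i x Kx; left; apply: (@bigU_mem n K _ i) => //; rewrite mem_enum.
have Lf : L `<=` dom f.
  move=> x [|->//]; move: x.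
  elim/big_ind: _ => //; first by move=> A B HA HB x [/HA|/HB].
  by move=> i _; exact: (hf i).2.1.
have H0 : forall i, exists e : R, 0 < e /\ forall x, K i x -> forall y1, f x = Some y1 ->
     forall y', d y1 y' < e -> V i y'.
  move=> i.
  pose Q := (fun (e : R) x => forall y1, f x = Some y1 ->
     forall y', d y1 y' < e -> V i y').
  have mono : forall e e' x, 0 < e' -> e' <= e -> Q e x -> Q e' x.
    by move=> e e' x _ le H y1 fy y' dy; apply: (H y1 fy); apply: lt_le_trans le.
  have loc : forall z, K i z -> exists2 e, 0 < e & nbhs z (Q e).
    move=> z Kz; have [a fa] := (hf i).2.1 z Kz.
    have Va := (hf i).2.2 z a Kz fa.
    have [e ep He] := (hKV i).2 a Va.
    have e2 : 0 < e / 2 by lra.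
    exists (e / 2) => //.
    apply: filterS (ball_nbhs Cf.2 fa e2).
    move=> x [a' fa' da'] y1; rewrite fa' => -[<-] y' dy'; apply: He.
    have := dtri a a' y'; lra.
  have [e ep He] := cover_lb (hKV i).1 mono loc.
  by exists e.
have [ef Hef] := choice H0.
have [e0 e0p He0] := seq_min (s := enum 'I_n) (e := ef) (fun i _ => (Hef i).1).
have fn : f <> (fun=> None).
  by move=> fE; case: fx0 => y; rewrite fE.
exists (BK d f L e0); split.
- right; exists f, L, e0; do ! split => //.
  by exists x0; right.
- do ! split => //.
  rewrite /dK; apply: (le_lt_trans _ e0p); apply: ge_sup.
    by case: fx0 => y fy; exists (d y y), x0, y, y; split => //; right.
  by move=> q [x [y1 [y2 [_ f1 f2 ->]]]]; move: f1; rewrite f2 => -[->]; rewrite d0.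
move=> g [Cg [gn [Lg dlt]]]; apply: hU => // i; split => //; split.
  by move=> x /LK /Lg.
move=> x y Kx gx; have [y1 fy1] := Lf x (LK i x Kx).
have [_ Hi] := Hef i; apply: (Hi x Kx y1 fy1).
have ub := dK_ub Cf.2 Cg.2 cL Lf Lg.
have : d y1 y <= dK d L f g.
  by apply: ub_le_sup => //; exists x, y1, y; split => //; exact: LK Kx.
have := He0 i; rewrite mem_enum => /(_ isT).
lra.
Qed.


Lemma cc_co (U : set (@pfun X Y)) : tau_cc d U -> tau_co d U.
Proof.
move=> [UC HU]; split => // f Uf.
have [B [[BC|[f0 [K [e [Cf0 [f0n [Kn [cK [Kf0 [ep BE]]]]]]]]]] Bf BU]] := HU f Uf.
  exists 0%N, (fun=> set0), (fun=> setT); split; try by case.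
  by move=> g Cg _; apply: BU; rewrite BC.
subst B; move: Bf => [Cf [fn [Kf dlt]]].
set D := dK d K f0 f.
pose r := (e - D) / 4.
have dltD : D < e by [].
have rp : 0 < r by rewrite /r; lra.
have nb : forall z, K z -> nbhs z [set x | forall yz, f z = Some yz ->
    exists2 y', f x = Some y' & d yz y' < r].
  move=> z Kz; have [yz fz] := Kf z Kz.
  apply: filterS (ball_nbhs Cf.2 fz rp) => x [y' fy' dy'] yz'.
  by rewrite fz => -[<-]; exists y'.
have [s [sK sc]] := finite_cover cK nb.
pose t := in_tuple s.
pose zs := fun i => tnth t i.
pose C := fun z => [set x | forall yz y, f z = Some yz -> f x = Some y -> d yz y <= r].
pose Vs := fun z => [set y | forall yz, f z = Some yz -> d yz y < 2 * r].
exists (size s), (fun i => K `&` C (zs i)), (fun i => Vs (zs i)); split.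
- move=> i; split; first exact: compact_closedI cK (@closedC f (zs i) r Cf.2).
  move=> y Hy; case E: (f (zs i)) => [yz|].
    have dl := Hy yz E.
    exists (2 * r - d yz y); first by rewrite subr_gt0.
    move=> y' dy' yz'; rewrite E => -[<-]; have := dtri yz y y'; lra.
  by exists 1 => // y' _ yz'; rewrite E.
- move=> i; split => //; split; first by move=> x [Kx _]; exact: Kf.
  move=> x y [Kx Cx] fx yz fz; have := Cx yz y fz fx; lra.
move=> g Cg Hg; apply: BU.
have cov : forall x, K x -> exists i, (K `&` C (zs i)) x.
  move=> x Kx; have [z zs' Nz] := sc x Kx.
  have /tnthP [i zi] : z \in t by [].
  exists i; split => // yz y; rewrite /zs -zi => fz fx.
  have [y' fy' dy'] := Nz yz fz; move: fy'; rewrite fx => -[->]; lra.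
have Kg : K `<=` dom g.
  by move=> x /cov [i Hi]; exact: (Hg i).2.1.
split => //; split.
  by move=> gE; have [x Kx] := Kn; have [y gy] := Kg x Kx; rewrite gE in gy.
split => //.
have ubf := dK_ub Cf0.2 Cf.2 cK Kf0 Kf.
rewrite /dK; apply: (@le_lt_trans _ _ (D + 3 * r)); last by rewrite /r; lra.
apply: ge_sup.
  have [x Kx] := Kn; have [y0 f0x] := Kf0 x Kx; have [y2 gx] := Kg x Kx.
  by exists (d y0 y2), x, y0, y2.
move=> q [x [y0 [y2 [Kx f0x gx ->]]]].
have [i [_ Cx]] := cov x Kx.
have [y1 fx] := Kf x Kx.
have [yz fz] := Kf (zs i) (sK _ (mem_tnth i t)).
have Vx := (Hg i).2.2 x y2 (conj Kx Cx) gx yz fz.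
have c1 := Cx yz y1 fz fx.
have : d y0 y1 <= D.
  by apply: ub_le_sup => //; exists x, y0, y1.
have := dtri y0 y1 y2; have := dtri y1 yz y2; rewrite (dsym y1 yz); lra.
Qed.

End M.

Unset Implicit Arguments.
Set Strict Implicit.
Local Close Scope ring_scope.

Theorem mainTheorem5 (R : realType) (X : topologicalType) (Y : Type)
  (d : Y -> Y -> R) :
  @hausdorff_space X -> locally_compact [set: X] -> @second_countable X ->
  is_metric d ->
  forall U : set (@pfun X Y), tau_co d U <-> tau_cc d U.
Proof.
move=> _ _ _ Hm U; split; [exact: co_cc | exact: cc_co].
Qed.
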